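(* Let $(f_n)_{n\ge0}$ be non-negative functions on $[0,T]$ with $M_0=\sup_{t\in[0,T]}f_0(t)<\infty$ and $M_1=\sup_{t\in[0,T]}f_1(t)<\infty$, and let $M=M_0+M_1$. Assume that for every $n\ge2$ and $t\in[0,T]$, $$f_n(t)\le\int_0^t\big(f_{n-1}(s)+f_{n-2}(s)\big)g(t-s)\,ds,$$ where $g:[0,T]\to\mathbb{R}_+$ is integrable. Then there exists a sequence $(a_n)$ of positive numbers with $\sum_{n\ge0}a_n^{1/p}<\infty$ for every $p>0$ and $\sup_{t\in[0,T]}f_n(t)\le Ma_n$ for all $n\ge0$. In particular $\sum_{n\ge0}\sup_{t\in[0,T]}f_n(t)^{1/p}<\infty$ for every $p>0$. *)

(* Defs.v *)
From HB Require Import structures.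
From mathcomp Require Import all_boot all_order all_algebra.
From mathcomp Require Import all_classical all_reals all_analysis.
Set Implicit Arguments. Unset Strict Implicit. Unset Printing Implicit Defensive.
Import Order.TTheory GRing.Theory Num.Theory.
Local Open Scope classical_set_scope.
Local Open Scope ring_scope.

Definition supT (R : realType) (T : R) (f : R -> R) : \bar R :=
  ereal_sup [set (f t)%:E | t in `[0, T]].

(* Main.v *)
Require Import Defs.
From HB Require Import structures.
From mathcomp Require Import all_boot all_order all_algebra.
From mathcomp Require Import all_classical all_reals all_analysis.
Import Order.TTheory GRing.Theory Num.Theory.
Local Open Scope ring_scope.
From mathcomp Require Import measurable_realfun.
From mathcomp Require Import ring lra.

Section AllHelpers.
Local Open Scope classical_set_scope.
Local Open Scope ring_scope.
Section Refl.
Context {R : realType}.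
Variable t : R.
Local Notation mu := (@lebesgue_measure R).

Lemma mreflt0 : measurable_fun [set: R] (fun x : R => t - x).
Proof. by apply: measurable_funB => //; exact: measurable_cst. Qed.
Definition reflf : measurableTypeR R -> measurableTypeR R := fun x => t - x.
Lemma mreflt : measurable_fun [set: measurableTypeR R] reflf.
Proof. exact: mreflt0. Qed.


Definition reflm : set (measurableTypeR R) -> \bar R := pushforward mu reflf.

Let r0 : reflm set0 = 0%E.
Proof. by rewrite /reflm /pushforward preimage_set0 measure0. Qed.

Let r_ge0 (A : set (measurableTypeR R)) : (0 <= reflm A)%E.
Proof. by rewrite /reflm /pushforward; exact: measure_ge0. Qed.

Let r_sa : semi_sigma_additive reflm.
Proof.
move=> F mF tF mUF; rewrite /reflm /pushforward preimage_bigcup.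
apply: measure_semi_sigma_additive.
- by move=> n; rewrite -[X in measurable X]setTI; apply: mreflt => //; exact: mF.
- apply/trivIsetP => /= i j _ _ ij; rewrite -preimage_setI.
  by move/trivIsetP : tF => /(_ _ _ _ _ ij) ->//; rewrite preimage_set0.
- by rewrite -preimage_bigcup -[X in measurable X]setTI; apply: mreflt.
Qed.

HB.instance Definition _ := isMeasure.Build _ _ _ reflm r0 r_ge0 r_sa.

Lemma reflmE (A : set (measurableTypeR R)) : measurable A -> mu A = reflm A.
Proof.
move=> mA; apply: (@lebesgue_measure_unique R reflm) => //.
move=> _ [[a b] _ <-]; rewrite /reflm /pushforward /=.
change (mu `]a, b]%classic = mu ((fun x : R => t - x) @^-1` `]a, b]%classic)).
have -> : (fun x : R => t - x) @^-1` `]a, b]%classic = `[t - b, t - a[%classic.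
  apply/seteqP; split => x /=; rewrite !in_itv/=.
    move=> /andP[h1 h2]; apply/andP; split; lra.
  move=> /andP[h1 h2]; apply/andP; split; lra.
rewrite !lebesgue_measure_itv /= !lte_fin.
have [ab|ba] := ltP a b.
  have -> : t - b < t - a by lra.
  congr (_%:E); lra.
by have -> : (t - b < t - a) = false by apply/negbTE; rewrite -leNgt; lra.
Qed.

End Refl.

Section Refl2.
Context {R : realType}.
Local Notation mu := (@lebesgue_measure R).

Lemma reflect_integral (t : R) (h : R -> R) : 0 <= t ->
  measurable_fun `[0%R, t] h -> (forall x, x \in `[0%R, t] -> 0 <= h x) ->
  (\int[mu]_(x in `[0%R, t]) (h (t - x))%:E = \int[mu]_(x in `[0%R, t]) (h x)%:E)%E.
Proof.
move=> t0 mh h0.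
rewrite [RHS](eq_measure_integral (reflm t)); last by move=> A mA _; exact: reflmE.
have h0' : {in `[0%R, t]%classic, forall y, (0 <= (EFin \o h) y)%E}.
  by move=> y; rewrite inE /= => yI; rewrite lee_fin; exact: h0.
have E := @ge0_integral_pushforward _ _ _ _ R (reflf t) (mreflt t) mu `[0%R, t] (fun x => (h x)%:E) (measurable_itv _) ((measurable_EFinP _ _).2 mh) h0'.
rewrite /reflm E.
have -> : reflf t @^-1` `[0%R, t]%classic = `[0%R, t]%classic.
  apply/seteqP; split => x /=; rewrite /reflf !in_itv/= => /andP[h1 h2]; apply/andP; split; lra.
by [].
Qed.

End Refl2.
Lemma crit_sum (R : realType) (x : nat -> R) : (forall n, 0 <= x n) ->
  (forall q : R, 0 < q -> q <= 1 -> exists C, 0 <= C /\ forall n, x n <= C * q ^+ n) ->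
  forall p : R, 0 < p -> (\sum_(0 <= n <oo) ((x n `^ p^-1)%:E) < +oo)%E.
Proof.
move=> x0 hx p p0.
set q := (2^-1 : R) `^ p.
have h2 : 0 < (2^-1 : R) <= 1.
  by apply/andP; split; rewrite ?invr_gt0 ?invf_le1 //; lra.
have q0 : 0 < q by apply: powR_gt0; lra.
have q1 : q <= 1.
  rewrite /q -{2}(powRr0 (2^-1 : R)).
  exact: (@ger_powR R (2^-1) h2 0 p (ltW p0)).
have [C [C0 hC]] := hx q q0 q1.
pose r := 2 * C `^ p^-1.
have sE : (\sum_(0 <= n <oo) ((r / (2 ^ (n + 1))%:R)%:E) = r%:E)%E.
  have := @cvg_geometric_eseries_half R r 0.
  rewrite expr0 divr1 => /cvg_lim <- //.
apply: (@le_lt_trans _ _ (\sum_(0 <= n <oo) ((r / (2 ^ (n + 1))%:R)%:E))%E); last by rewrite sE ltry.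
apply: lee_nneseries => [n _ _|n _]; first by rewrite lee_fin powR_ge0.
rewrite lee_fin.
have qp : q `^ p^-1 = 2^-1 by rewrite /q -powRrM mulfV ?powRr1 //; lra.
have -> : r / (2 ^ (n + 1))%:R = C `^ p^-1 * (q `^ p^-1) ^+ n.
  rewrite qp /r natrX exprD expr1 exprVn.
  have : (2 : R) ^+ n != 0 by rewrite expf_neq0 //; lra.
  move=> h; field; rewrite h /=; lra.
have -> : (q `^ p^-1) ^+ n = (q ^+ n) `^ p^-1.
  rewrite -(powR_mulrn _ (powR_ge0 _ _)) -powRrM mulrC powRrM powR_mulrn //; exact: ltW.
rewrite -powRM ?exprn_ge0 //; last exact: ltW.
apply: ge0_ler_powR.
- by rewrite invr_ge0 ltW.
- by rewrite nnegrE.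
- by rewrite nnegrE mulr_ge0 // exprn_ge0 // ltW.
- exact: hC.
Qed.


Lemma expR_sq_bound (R : realType) (q : R) : 0 < q -> q <= 1 ->
  exists C, 0 <= C /\ forall n : nat, expR (- (n%:R ^+ 2)) <= C * q ^+ n.
Proof.
move=> q0 q1; exists (expR (ln q ^+ 2 / 4)); split; first exact: expR_ge0.
move=> n; rewrite -{2}(lnK q0) -expRM_natl -expRD ler_expR.
set L := ln q; set m : R := n%:R.
have : 0 <= (m + L / 2) ^+ 2 by exact: sqr_ge0.
move=> h; nra.
Qed.
Section SW.
Context {R : realType}.
Local Notation mu := (@lebesgue_measure R).

Lemma meas_weight (D : set R) (g : R -> R) (c : R) : measurable D ->
  measurable_fun D g ->
  measurable_fun D (fun u => (expR (c * u) * g u)%:E).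
Proof.
move=> mD mg; apply/measurable_EFinP.
apply: measurable_funM => //.
apply: measurableT_comp => //.
Qed.

Lemma small_weight (T : R) (g : R -> R) : 0 < T ->
  (forall t, t \in `[0, T] -> 0 <= g t) ->
  mu.-integrable `[0, T] (EFin \o g) ->
  forall eps : R, 0 < eps -> exists lam : R, 0 <= lam /\
    (\int[mu]_(u in `[0%R, T]) (expR (- lam * u) * g u)%:E <= eps%:E)%E.
Proof.
move=> T0 g0 ig eps eps0.
have mg : measurable_fun `[0, T] g := (measurable_EFinP _ _).1 (measurable_int _ ig).
have mgD : measurable_fun `]0, T] g.
  by apply: measurable_funS mg => //; apply: subset_itv; rewrite bnd_simp.
set F := fun k : nat => (\int[mu]_(u in `]0%R, T]) (expR (- k%:R * u) * g u)%:E)%E.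
have hc : F k @[k --> \oo] --> 0%E.
  rewrite -(integral0 mu `]0%R, T]).
  apply: (@dominated_cvg _ _ _ mu `]0%R, T] (measurable_itv _) (fun k u => (expR (- k%:R * u) * g u)%:E) (cst 0%E) (EFin \o g)).
  - by move=> k; apply: meas_weight.
  - move=> u; rewrite /= in_itv /= => /andP[u0 _].
    apply/fine_cvgP; split; first exact: nearW.
    rewrite (_ : fine \o _ = fun k => expR (- u) ^+ k * g u); last first.
      by apply/funext => k; rewrite /= -expRM_natl mulrN mulNr.
    rewrite -(mul0r (g u)); apply: cvgMr_tmp; apply: cvg_expr.
    by rewrite ger0_norm ?expR_ge0 // expR_lt1 oppr_lt0.
  - by [].
  - by apply: integrableS ig => //; apply: subset_itv; rewrite bnd_simp.
  - move=> k u; rewrite /= in_itv /= => /andP[u0 uT].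
    have gu : 0 <= g u by apply: g0; rewrite in_itv /= (ltW u0).
    rewrite ger0_norm ?mulr_ge0 ?expR_ge0 // lee_fin ler_piMl // expR_le1.
    by rewrite mulNr oppr_le0 mulr_ge0 // ltW.
have := hc; move/fine_cvgP => [hfin hc'].
have [N1 _ H1] := hfin.
have [N2 _ H2] := cvgr_lt _ hc' eps eps0.
set k := maxn N1 N2.
have k1 : (N1 <= k)%N by rewrite leq_maxl.
have k2 : (N2 <= k)%N by rewrite leq_maxr.
exists k%:R; split; first by [].
have := H1 _ k1; have := H2 _ k2; rewrite /= => hk fk.
rewrite -integral_itv_obnd_cbnd; last by apply: meas_weight.
rewrite -/(F k) -(fineK fk) lee_fin; exact: ltW.
Qed.
End SW.
Section NM.
Context {R : realType}.
Local Notation mu := (@lebesgue_measure R).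

Lemma le_integral_nm (D : set (measurableTypeR R)) (f1 f2 : measurableTypeR R -> \bar R) :
  (forall x, D x -> (0 <= f1 x)%E) -> (forall x, D x -> (f1 x <= f2 x)%E) ->
  (\int[mu]_(x in D) f1 x <= \int[mu]_(x in D) f2 x)%E.
Proof.
move=> f10 f12.
have f20 : forall x, D x -> (0 <= f2 x)%E by move=> x Dx; exact: le_trans (f10 _ Dx) (f12 _ Dx).
rewrite (ge0_integralE mu f10) (ge0_integralE mu f20) /=.
apply: ereal_sup_le => _ [h hle <-]; exists h => //= x.
exact: le_trans (hle x) (lee_restrict f12 x).
Qed.
End NM.

Section SupT.
Context {R : realType}.

Lemma supT_ub {T : R} {h : R -> R} {t : R} : t \in `[0, T] -> ((h t)%:E <= supT T h)%E.
Proof. by move=> tI; apply: ereal_sup_ubound; exists t => //; rewrite inE. Qed.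

Lemma supT_le (T : R) (h : R -> R) (b : \bar R) :
  (forall t, t \in `[0, T] -> ((h t)%:E <= b)%E) -> (supT T h <= b)%E.
Proof. by move=> hb; apply: ge_ereal_sup => _ [t tI <-]; apply: hb; move: tI; rewrite inE. Qed.

Lemma supT_ge0 (T : R) (h : R -> R) : 0 <= T ->
  (forall t, t \in `[0, T] -> 0 <= h t) -> (0 <= supT T h)%E.
Proof.
move=> T0 h0; have I0 : (0 : R) \in `[0, T] by rewrite in_itv /= lexx T0.
by apply: le_trans _ (supT_ub I0); rewrite lee_fin h0.
Qed.

Lemma supT_fin (T : R) (h : R -> R) : 0 <= T ->
  (forall t, t \in `[0, T] -> 0 <= h t) -> (supT T h < +oo)%E ->
  supT T h = (fine (supT T h))%:E.
Proof. by move=> T0 h0 hlt; rewrite fineK // ge0_fin_numE // supT_ge0. Qed.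

End SupT.

Section Main.
Variables (R : realType) (T : R) (f : nat -> R -> R) (g : R -> R).
Local Notation mu := (@lebesgue_measure R).
Hypothesis T0 : 0 < T.
Hypothesis f0 : forall n t, t \in `[0, T] -> 0 <= f n t.
Hypothesis g0 : forall t, t \in `[0, T] -> 0 <= g t.
Hypothesis ig : mu.-integrable `[0, T] (EFin \o g).
Hypothesis hrec : forall n t, t \in `[0, T] ->
     ((f n.+2 t)%:E <=
       \int[mu]_(s in `[0%R, t]%classic) ((f n.+1 s + f n s) * g (t - s))%:E)%E.

Let mg : measurable_fun `[0, T] g := (measurable_EFinP _ _).1 (measurable_int _ ig).

Lemma step (lam eps B : R) (n : nat) (t : R) : 0 <= lam -> 0 <= B ->
  (\int[mu]_(u in `[0%R, T]) (expR (- lam * u) * g u)%:E <= eps%:E)%E ->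
  (forall s, s \in `[0, T] -> f n.+1 s + f n s <= B * expR (lam * s)) ->
  t \in `[0, T] -> f n.+2 t <= B * eps * expR (lam * t).
Proof.
move=> lam0 B0 heps hB tI.
have := tI; rewrite in_itv /= => /andP[t0 tT].
have sub : forall s, s \in `[0, t] -> s \in `[0, T] /\ t - s \in `[0, T].
  move=> s; rewrite !in_itv /= => /andP[s0 st]; split; apply/andP; split; lra.
rewrite -lee_fin.
have H := hrec n t tI.
apply: le_trans H _.
apply: (@le_trans _ _ (\int[mu]_(s in `[0%R, t]%classic) (B * expR (lam * s) * g (t - s))%:E)%E).
  apply: le_integral_nm => s; rewrite /= => sI; have [sT tsT] := sub s sI.
    by rewrite lee_fin mulr_ge0 ?addr_ge0 ?f0 ?g0.
  by rewrite lee_fin ler_wpM2r ?g0 // hB.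
set h := fun u => B * expR (lam * t) * (expR (- lam * u) * g u).
have mh : measurable_fun `[0, t] h.
  apply: measurable_funM; first exact: measurable_cst.
  apply/measurable_EFinP; apply: meas_weight => //.
  by apply: measurable_funS mg => //; apply: subset_itv; rewrite bnd_simp.
have h0 : forall u, u \in `[0, t] -> 0 <= h u.
  by move=> u /sub [uT _]; rewrite /h !mulr_ge0 ?expR_ge0 ?g0.
rewrite (@eq_integral _ _ _ mu _ (fun s => (h (t - s))%:E)); last first.
  move=> s _; congr EFin; rewrite /h.
  rewrite [in RHS]mulrA -[in RHS](mulrA B) -expRD.
  by congr (B * expR _ * _); ring.
rewrite reflect_integral //.
have mw : measurable_fun `[0, t] (fun u => (expR (- lam * u) * g u)%:E).
  apply: meas_weight => //.
  by apply: measurable_funS mg => //; apply: subset_itv; rewrite bnd_simp.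
have w0 : forall u, `[0, t]%classic u -> (0 <= (expR (- lam * u) * g u)%:E)%E.
  by move=> u /= /sub [uT _]; rewrite lee_fin mulr_ge0 ?expR_ge0 ?g0.
rewrite /h; under eq_integral do rewrite EFinM.
rewrite ge0_integralZl_EFin //; last by rewrite mulr_ge0 ?expR_ge0.
rewrite (_ : B * eps * expR (lam * t) = (B * expR (lam * t)) * eps); last by ring.
rewrite [X in (_ <= X)%E]EFinM lee_wpmul2l //.
  by rewrite lee_fin mulr_ge0 ?expR_ge0.
apply: le_trans heps.
apply: ge0_subset_integral => //.
- apply: meas_weight => //.
- by move=> u /= uI; rewrite lee_fin mulr_ge0 ?expR_ge0 ?g0.
- by apply: subset_itv; rewrite bnd_simp.
Qed.

Lemma bound_all (lam q K : R) : 0 <= lam -> 0 < q -> q <= 1 -> 0 <= K ->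
  (\int[mu]_(u in `[0%R, T]) (expR (- lam * u) * g u)%:E <= (q ^+ 2 / 2)%:E)%E ->
  (forall t, t \in `[0, T] -> f 0 t <= K) ->
  (forall t, t \in `[0, T] -> f 1 t <= K * q) ->
  forall n t, t \in `[0, T] -> f n t <= K * q ^+ n * expR (lam * t).
Proof.
move=> lam0 q0 q1 K0 heps hf0 hf1.
have e1 : forall t, t \in `[0, T] -> 1 <= expR (lam * t).
  move=> t; rewrite in_itv /= => /andP[t0 _].
  by rewrite -[X in X <= _]expR0 ler_expR mulr_ge0.
suff H : forall n, (forall t, t \in `[0, T] -> f n t <= K * q ^+ n * expR (lam * t)) /\
                   (forall t, t \in `[0, T] -> f n.+1 t <= K * q ^+ n.+1 * expR (lam * t)).
  by move=> n; have [] := H n.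
elim=> [|n [IH1 IH2]].
  split=> t tI; rewrite ?expr0 ?expr1 ?mulr1.
    by apply: le_trans (hf0 t tI) _; rewrite ler_peMr // e1.
  apply: le_trans (hf1 t tI) _; rewrite ler_peMr ?e1 //; exact: mulr_ge0 K0 (ltW q0).
split=> // t tI.
have qn0 : 0 <= q ^+ n by rewrite exprn_ge0 // ltW.
apply: le_trans (@step lam (q ^+ 2 / 2) (K * q ^+ n.+1 + K * q ^+ n) n t lam0 _ heps _ tI) _.
- by rewrite addr_ge0 // mulr_ge0 // exprn_ge0 // ltW.
- move=> s sI; rewrite mulrDl; exact: lerD (IH2 s sI) (IH1 s sI).
rewrite ler_wpM2r ?expR_ge0 //.
rewrite !exprS.
set P := K * q ^+ n.
have P0 : 0 <= P by rewrite mulr_ge0.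
have -> : K * (q * (q * q ^+ n)) = P * q * q by rewrite /P; ring.
have -> : K * (q * q ^+ n) = P * q by rewrite /P; ring.
rewrite expr0 mulr1.
have : 0 <= P * q * q by rewrite !mulr_ge0 // ltW.
move=> h; nra.
Qed.

Hypothesis hs0 : (supT T (f 0%N) < +oo)%E.
Hypothesis hs1 : (supT T (f 1%N) < +oo)%E.

Let F0 := fine (supT T (f 0%N)).
Let F1 := fine (supT T (f 1%N)).
Let M := F0 + F1.

Lemma F_props : 0 <= F0 /\ 0 <= F1 /\
  (forall t, t \in `[0, T] -> f 0 t <= F0) /\ (forall t, t \in `[0, T] -> f 1 t <= F1).
Proof.
have T0' : 0 <= T by exact: ltW.
have E0 := supT_fin T (f 0) T0' (f0 0) hs0.
have E1 := supT_fin T (f 1) T0' (f0 1) hs1.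
split; first by rewrite /F0 fine_ge0 // supT_ge0 // => t; exact: f0.
split; first by rewrite /F1 fine_ge0 // supT_ge0 // => t; exact: f0.
split=> t tI; rewrite -lee_fin.
  by rewrite /F0 -E0; exact: supT_ub.
by rewrite /F1 -E1; exact: supT_ub.
Qed.

Lemma key (q : R) : 0 < q -> q <= 1 ->
  exists C, 0 <= C /\ forall n t, t \in `[0, T] -> f n t <= M * C * q ^+ n.
Proof.
move=> q0 q1.
have [F00 [F10 [hF0 hF1]]] := F_props.
have M0 : 0 <= M by rewrite addr_ge0.
have eps0 : 0 < q ^+ 2 / 2 by rewrite divr_gt0 // exprn_gt0.
have [lam [lam0 hlam]] := small_weight T g T0 g0 ig _ eps0.
set K := M / q.
have K0 : 0 <= K by rewrite divr_ge0 // ltW.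
have hb := bound_all lam q K lam0 q0 q1 K0 hlam.
have MK : M <= K by rewrite /K ler_pdivlMr // ler_piMr.
have KqM : K * q = M by rewrite /K divfK // gt_eqF.
have F0M : F0 <= M by rewrite /M lerDl.
have F1M : F1 <= K * q by rewrite KqM /M lerDr.
have hbn := hb (fun t tI => le_trans (hF0 t tI) (le_trans F0M MK))
               (fun t tI => le_trans (hF1 t tI) F1M).
exists (expR (lam * T) / q); split; first by rewrite divr_ge0 ?expR_ge0 // ltW.
move=> n t tI; apply: le_trans (hbn n t tI) _.
have := tI; rewrite in_itv /= => /andP[t0 tT].
have -> : M * (expR (lam * T) / q) * q ^+ n = K * q ^+ n * expR (lam * T).
  by rewrite /K; field; rewrite gt_eqF.
have Kq : 0 <= K * q ^+ n by rewrite mulr_ge0 // exprn_ge0 // ltW.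
by rewrite ler_wpM2l // ler_expR ler_wpM2l.
Qed.

End Main.


End AllHelpers.

Theorem lemma3p9 (R : realType) (T : R) (f : nat -> R -> R) (g : R -> R) :
  0 < T ->
  (forall n t, t \in `[0, T] -> 0 <= f n t) ->
  (supT T (f 0%N) < +oo)%E ->
  (supT T (f 1%N) < +oo)%E ->
  (forall t, t \in `[0, T] -> 0 <= g t) ->
  (@lebesgue_measure R).-integrable `[0, T] (EFin \o g) ->
  (forall n t, t \in `[0, T] ->
     ((f n.+2 t)%:E <=
       \int[@lebesgue_measure R]_(s in `[0%R, t]%classic) ((f n.+1 s + f n s) * g (t - s))%:E)%E) ->
  let M := fine (supT T (f 0%N)) + fine (supT T (f 1%N)) in
  exists a : nat -> R,
    (forall n, 0 < a n) /\
        (forall p : R, 0 < p -> (\sum_(0 <= n <oo) (((a n) `^ p^-1)%R)%:E < +oo)%E) /\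
        (forall n, (supT T (f n) <= (M * a n)%:E)%E) /\
        (forall p : R, 0 < p ->
           (\sum_(0 <= n <oo) (supT T (fun t : R => (f n t `^ p^-1)%R)) < +oo)%E).
Proof.
move=> T0 f0 hs0 hs1 g0 ig hrec M.
have key' := @key R T f g T0 f0 g0 ig hrec hs0 hs1.
have T0' : 0 <= T by exact: ltW.
have M0 : 0 <= M by rewrite addr_ge0 // fine_ge0 // supT_ge0 // => t; exact: f0.
pose S n := fine (supT T (f n)).
have SE : forall n, supT T (f n) = (S n)%:E /\ 0 <= S n.
  move=> n; have [C [C0 hC]] := key' 1 ltr01 (lexx _).
  have hlt : (supT T (f n) < +oo)%E.
    apply: (@le_lt_trans _ _ (M * C * 1 ^+ n)%:E); last exact: ltry.
    by apply: supT_le => t tI; rewrite lee_fin hC.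
  have E := supT_fin T (f n) T0' (f0 n) hlt.
  split => //; rewrite /S fine_ge0 // supT_ge0 // => t; exact: f0.
have SB : forall q, 0 < q -> q <= 1 -> exists C, 0 <= C /\ forall n, S n <= M * C * q ^+ n.
  move=> q q0 q1; have [C [C0 hC]] := key' q q0 q1; exists C; split => // n.
  rewrite -lee_fin -(proj1 (SE n)); apply: supT_le => t tI; rewrite lee_fin; exact: hC.
pose a n := S n / M + expR (- (n%:R ^+ 2)).
have a0 : forall n, 0 < a n.
  by move=> n; rewrite /a ltr_pwDr ?expR_gt0 // divr_ge0 // (proj2 (SE n)).
have aB : forall q, 0 < q -> q <= 1 -> exists C, 0 <= C /\ forall n, a n <= C * q ^+ n.
  move=> q q0 q1.
  have [C1 [C10 h1]] := SB q q0 q1.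
  have [C2 [C20 h2]] := @expR_sq_bound R q q0 q1.
  exists (C1 + C2); split; first exact: addr_ge0.
  move=> n; rewrite /a mulrDl; apply: lerD => //.
  have [->|Mn0] := eqVneq M 0; first by rewrite invr0 mulr0 mulr_ge0 // exprn_ge0 // ltW.
  rewrite ler_pdivrMr; last by rewrite lt_def Mn0 M0.
  by rewrite (mulrC _ M) mulrA; exact: h1.
have MaS : forall n, S n <= M * a n.
  move=> n; have [Me|Mn0] := eqVneq M 0.
    have [C [C0 hC]] := SB 1 ltr01 (lexx _).
    by have := hC n; rewrite Me !mul0r.
  rewrite /a mulrDr mulrCA divff // mulr1 lerDl mulr_ge0 // expR_ge0.
exists a; split => //; split; first exact: @crit_sum R a (fun n => ltW (a0 n)) aB.
split; first by move=> n; rewrite (proj1 (SE n)) lee_fin.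
move=> p p0.
have Ma0 : forall n, 0 <= M * a n by move=> n; rewrite mulr_ge0 // ltW.
have MaB : forall q, 0 < q -> q <= 1 -> exists C, 0 <= C /\ forall n, M * a n <= C * q ^+ n.
  move=> q q0 q1; have [C [C0 hC]] := aB q q0 q1.
  exists (M * C); split; first exact: mulr_ge0.
  by move=> n; rewrite -mulrA ler_wpM2l.
apply: le_lt_trans (@crit_sum R (fun n => M * a n) Ma0 MaB p p0).
apply: lee_nneseries => [n _ _|n _].
  by apply: supT_ge0 => // t _; exact: powR_ge0.
apply: supT_le => t tI; rewrite lee_fin.
apply: ge0_ler_powR.
- by rewrite invr_ge0 ltW.
- by rewrite nnegrE f0.
- by rewrite nnegrE.
- apply: le_trans (MaS n); rewrite -lee_fin -(proj1 (SE n)); exact: supT_ub.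
Qed.
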